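(* Let $K$ be a finitely separable ring. (1) Every element $a\in K$ is algebraic, i.e. $g(a)=0$ for some nonzero $g\in\mathbb{Z}[x]$ with $g(0)=0$. (2) For any two commuting elements $a,b\in K$ and any prime $p$ there exists a polynomial $f(x,y)\in\mathbb{Z}[x,y]$ (in commuting variables) with zero constant term, not all of whose coefficients are divisible by $p$, such that $f(a,b)=0$.
   Context: Rings are associative and not necessarily unital. A ring $K$ is finitely separable if for every $a\in K$ and every subring $A\subseteq K$ with $a\notin A$ there exist a finite ring $F$ and a homomorphism $\varphi:K\to F$ with $\varphi(a)\notin\varphi(A)$. *)

(* Defs.v *)
From HB Require Import structures.
From mathcomp Require Import all_boot all_order all_algebra.
Set Implicit Arguments. Unset Strict Implicit. Unset Printing Implicit Defensive.
Import Order.TTheory GRing.Theory Num.Theory.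
Local Open Scope ring_scope.

Record rng_axioms (K : zmodType) (mul : K -> K -> K) : Prop := RngAxioms {
  rng_mulA : forall x y z, mul x (mul y z) = mul (mul x y) z;
  rng_mulDl : forall x y z, mul (x + y) z = mul x z + mul y z;
  rng_mulDr : forall x y z, mul x (y + z) = mul x y + mul x z }.

Definition is_subrng (K : zmodType) (mul : K -> K -> K) (A : K -> Prop) : Prop :=
  A 0 /\ (forall x y, A x -> A y -> A (x - y)) /\
  (forall x y, A x -> A y -> A (mul x y)).

Definition is_rng_hom (K F : zmodType) (mulK : K -> K -> K) (mulF : F -> F -> F)
  (phi : K -> F) : Prop :=
  (forall x y, phi (x + y) = phi x + phi y) /\
  (forall x y, phi (mulK x y) = mulF (phi x) (phi y)).

Definition finitely_separable (K : zmodType) (mul : K -> K -> K) : Prop :=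
  forall (a : K) (A : K -> Prop), is_subrng mul A -> ~ A a ->
    exists (F : finZmodType) (mulF : F -> F -> F),
      rng_axioms mulF /\
      exists phi : K -> F, is_rng_hom mul mulF phi /\
        ~ (exists x, A x /\ phi x = phi a).

(* Positive powers in a non-unital ring: rpow x n = x^n for n >= 1,
   and rpow x 0 = 0 (only ever multiplied by a zero constant coefficient). *)
Definition rpow (K : zmodType) (mul : K -> K -> K) (x : K) (n : nat) : K :=
  match n with 0 => 0 | n'.+1 => iter n' (mul x) x end.

Definition peval (K : zmodType) (mul : K -> K -> K) (g : {poly int}) (a : K) : K :=
  \sum_(i < size g) (rpow mul a i) *~ g`_i.

Definition mono (K : zmodType) (mul : K -> K -> K) (a b : K) (i j : nat) : K :=
  if i == 0%N then rpow mul b j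
  else if j == 0%N then rpow mul a i
  else mul (rpow mul a i) (rpow mul b j).

(* f in Z[x,y] is represented as f : {poly {poly int}}, with f`_i`_j the
   coefficient of x^i y^j; evaluation for f with zero constant term. *)
Definition peval2 (K : zmodType) (mul : K -> K -> K) (f : {poly {poly int}}) (a b : K) : K :=
  \sum_(i < size f) \sum_(j < size f`_i) (mono mul a b i j) *~ f`_i`_j.

(* Main.v *)
Require Import Defs.
From HB Require Import structures.
From mathcomp Require Import all_boot all_order all_algebra all_fingroup.
From mathcomp Require Import cyclic fraction.
From Stdlib Require Import Classical.
From mathcomp Require Import ring.
Import GRing.Theory.
Local Open Scope ring_scope.

Lemma mulrn_card (F : finZmodType) (x : F) : x *+ #|F| = 0.
Proof.
rewrite -FinRing.zmodXgE -cardsT; apply: expg_cardG; exact: in_setT.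
Qed.

Lemma mulzl (K : zmodType) (mul : K -> K -> K) (H : rng_axioms mul) z :
  zmod_morphism (fun y => mul y z).
Proof. by case: H => _ Dl _ x y; apply/eqP; rewrite eq_sym subr_eq -Dl subrK. Qed.
Lemma mulzr (K : zmodType) (mul : K -> K -> K) (H : rng_axioms mul) z :
  zmod_morphism (mul z).
Proof. by case: H => _ _ Dr x y; apply/eqP; rewrite eq_sym subr_eq -Dr subrK. Qed.

Lemma mulMzl (K : zmodType) (mul : K -> K -> K) (H : rng_axioms mul) x y n :
  mul (x *~ n) y = (mul x y) *~ n.
Proof.
pose f : {additive K -> K} := HB.pack (fun y => mul y _) (GRing.isZmodMorphism.Build K K _ (@mulzl K mul H y)).
exact: (raddfMz f).
Qed.
Lemma mulMzr (K : zmodType) (mul : K -> K -> K) (H : rng_axioms mul) x y n :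
  mul x (y *~ n) = (mul x y) *~ n.
Proof.
pose f : {additive K -> K} := HB.pack (mul x) (GRing.isZmodMorphism.Build K K _ (@mulzr K mul H x)).
exact: (raddfMz f).
Qed.
Lemma kmul0l (K : zmodType) (mul : K -> K -> K) (H : rng_axioms mul) y : mul 0 y = 0.
Proof. by rewrite -(mulr0z 0) (@mulMzl K mul H). Qed.
Lemma kmul0r (K : zmodType) (mul : K -> K -> K) (H : rng_axioms mul) y : mul y 0 = 0.
Proof. by rewrite -(mulr0z 0) (@mulMzr K mul H). Qed.

Definition dor (K : zmodType) (mul : K -> K -> K) (H : rng_axioms mul) : Type := (int * K)%type.
HB.instance Definition _ (K : zmodType) (mul : K -> K -> K) (H : rng_axioms mul) :=
  GRing.Zmodule.on (@dor K mul H).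

Definition dmul (K : zmodType) (mul : K -> K -> K) (H : rng_axioms mul) (x y : @dor K mul H) : @dor K mul H :=
  (x.1 * y.1, x.2 *~ y.1 + y.2 *~ x.1 + mul x.2 y.2).
Definition done_ (K : zmodType) (mul : K -> K -> K) (H : rng_axioms mul) : @dor K mul H := (1, 0).

Lemma dmulA (K : zmodType) (mul : K -> K -> K) (H : rng_axioms mul) : associative (@dmul K mul H).
Proof.
move=> [n x] [m y] [l z]; rewrite /dmul /=; congr pair; first by rewrite mulrA.
case: (H) => A Dl Dr.
rewrite !Dl !Dr !(@mulMzl K mul H) !(@mulMzr K mul H) A !mulrzDl -!mulrzA.
rewrite [l * n]mulrC [m * n]mulrC.
set a := x *~ _. set b := y *~ _. set c := z *~ _. set d := mul y z *~ n.
set e := mul x y *~ l. set f := mul x z *~ m. set g := mul (mul x y) z.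
rewrite !addrA; congr (_ + _).
by rewrite (addrAC (a+b+c) d e) (addrAC (a+b) c e) (addrAC (a+b+e+c) d f).
Qed.


Lemma dmul1 (K : zmodType) (mul : K -> K -> K) (H : rng_axioms mul) :
  left_id (@done_ K mul H) (@dmul K mul H).
Proof. by move=> [m y]; rewrite /dmul /= mul1r mul0rz add0r mulr1z (@kmul0l K mul H) addr0. Qed.
Lemma dmul1r (K : zmodType) (mul : K -> K -> K) (H : rng_axioms mul) :
  right_id (@done_ K mul H) (@dmul K mul H).
Proof. by move=> [m y]; rewrite /dmul /= mulr1 mul0rz addr0 mulr1z (@kmul0r K mul H) addr0. Qed.
Lemma dmulDl (K : zmodType) (mul : K -> K -> K) (H : rng_axioms mul) :
  left_distributive (@dmul K mul H) +%R.
Proof.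
move=> [n x] [m y] [l z]; rewrite /dmul /=; congr pair; first by rewrite mulrDl.
case: (H) => _ Dl _; rewrite Dl mulrzDl mulrzDr /=.
set a := x *~ l. set b := y *~ l. set c := z *~ n. set d := z *~ m.
set e := mul x z. set f := mul y z.
rewrite !addrA; congr (_ + _).
by rewrite (addrAC a b c) (addrAC (a+c+b) d e) (addrAC (a+c) b e).
Qed.
Lemma dmulDr (K : zmodType) (mul : K -> K -> K) (H : rng_axioms mul) :
  right_distributive (@dmul K mul H) +%R.
Proof.
move=> [n x] [m y] [l z]; rewrite /dmul /=; congr pair; first by rewrite mulrDr.
case: (H) => _ _ Dr; rewrite Dr mulrzDl mulrzDr /=.
set a := x *~ m. set b := x *~ l. set c := y *~ n. set d := z *~ n.
set e := mul x y. set f := mul x z.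
rewrite !addrA; congr (_ + _).
by rewrite (addrAC a b c) (addrAC (a+c+b) d e) (addrAC (a+c) b e).
Qed.
Lemma done_neq0 (K : zmodType) (mul : K -> K -> K) (H : rng_axioms mul) :
  (@done_ K mul H) != 0.
Proof. by []. Qed.

HB.instance Definition _ (K : zmodType) (mul : K -> K -> K) (H : rng_axioms mul) :=
  GRing.Zmodule_isNzRing.Build (@dor K mul H) (@dmulA K mul H) (@dmul1 K mul H) (@dmul1r K mul H)
   (@dmulDl K mul H) (@dmulDr K mul H) (@done_neq0 K mul H).

Lemma dorM (K : zmodType) (mul : K -> K -> K) (H : rng_axioms mul) (x y : @dor K mul H) :
  x * y = (x.1 * y.1, x.2 *~ y.1 + y.2 *~ x.1 + mul x.2 y.2).
Proof. by []. Qed.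

Set Implicit Arguments. Unset Strict Implicit.

Lemma hv_cf (R : nzRingType) (v : R) : commr_rmorph (intr : int -> R) v.
Proof. by move=> x; apply: commr_int. Qed.
Definition hv (R : nzRingType) (v : R) := horner_morph (hv_cf v).
Lemma hvE (R : nzRingType) (v : R) q : hv v q = \sum_(i < size q) (q`_i)%:~R * v ^+ i.
Proof.
rewrite /hv /horner_morph (horner_coef_wide _ (size_poly _ _)).
by apply: eq_bigr => i _; rewrite coef_map.
Qed.
Lemma ev2_cf (R : nzRingType) (u v : R) (cuv : GRing.comm u v) : commr_rmorph (hv v) u.
Proof.
move=> q; rewrite hvE; apply: commr_sum => i _.
by apply: commrM; [apply: commr_int | apply: commrX].
Qed.
Definition ev2 (R : nzRingType) (u v : R) (cuv : GRing.comm u v) := horner_morph (ev2_cf cuv).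
Lemma ev2E (R : nzRingType) (u v : R) (cuv : GRing.comm u v) f :
  ev2 cuv f = \sum_(i < size f) (\sum_(j < size f`_i) (f`_i`_j)%:~R * v ^+ j) * u ^+ i.
Proof.
rewrite /ev2 /horner_morph (horner_coef_wide _ (size_poly _ _)).
by apply: eq_bigr => i _; rewrite coef_map; congr (_ * _); exact: hvE.
Qed.
Lemma ev2M (R : nzRingType) (u v : R) (cuv : GRing.comm u v) f g :
  ev2 cuv (f * g) = ev2 cuv f * ev2 cuv g.
Proof. exact: rmorphM. Qed.
Lemma ev2B (R : nzRingType) (u v : R) (cuv : GRing.comm u v) f g :
  ev2 cuv (f - g) = ev2 cuv f - ev2 cuv g.
Proof. exact: rmorphB. Qed.
Lemma ev2D (R : nzRingType) (u v : R) (cuv : GRing.comm u v) f g :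
  ev2 cuv (f + g) = ev2 cuv f + ev2 cuv g.
Proof. exact: rmorphD. Qed.
Lemma ev2X (R : nzRingType) (u v : R) (cuv : GRing.comm u v) n :
  ev2 cuv ('X ^+ n) = u ^+ n.
Proof. rewrite /ev2 rmorphXn; congr (_ ^+ _); exact: horner_morphX. Qed.
Lemma ev2Y (R : nzRingType) (u v : R) (cuv : GRing.comm u v) n :
  ev2 cuv (('X ^+ n)%:P) = v ^+ n.
Proof. rewrite /ev2 horner_morphC /hv rmorphXn; congr (_ ^+ _); exact: horner_morphX. Qed.
Lemma ev2C (R : nzRingType) (u v : R) (cuv : GRing.comm u v) c :
  ev2 cuv (c%:P%:P) = c%:~R.
Proof. rewrite /ev2 horner_morphC /hv; exact: horner_morphC. Qed.
Lemma ev2_1 (R : nzRingType) (u v : R) (cuv : GRing.comm u v) :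
  ev2 cuv 1 = 1.
Proof. exact: rmorph1. Qed.

Lemma hvM (R : nzRingType) (v : R) f g : hv v (f * g) = hv v f * hv v g.
Proof. exact: rmorphM. Qed.
Lemma hvB (R : nzRingType) (v : R) f g : hv v (f - g) = hv v f - hv v g.
Proof. exact: rmorphB. Qed.
Lemma hvX (R : nzRingType) (v : R) n : hv v ('X ^+ n) = v ^+ n.
Proof. rewrite /hv rmorphXn; congr (_ ^+ _); exact: horner_morphX. Qed.
Lemma hvC (R : nzRingType) (v : R) c : hv v c%:P = c%:~R.
Proof. exact: horner_morphC. Qed.

Section Dor.
End Dor.

Lemma dor_eta (K : zmodType) (mul : K -> K -> K) (H : rng_axioms mul) (s : @dor K mul H) :
  s = (s.1, s.2).
Proof. by case: s. Qed.

Lemma dor_intr (K : zmodType) (mul : K -> K -> K) (H : rng_axioms mul) (c : int) :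
  (c%:~R : @dor K mul H) = (c, 0).
Proof.
have P n : ((n%:R : @dor K mul H) = (n%:Z, 0)).
  elim: n => [//|n IH]; rewrite -natr1 IH /=.
  by congr pair; rewrite ?addr0 // -addn1 PoszD.
case: c => k; first by rewrite -pmulrn P.
rewrite NegzE mulrNz -pmulrn P; congr pair; exact: oppr0.
Qed.

Lemma dor_intrM (K : zmodType) (mul : K -> K -> K) (H : rng_axioms mul) (c e : int) (r : K) :
  (c%:~R : @dor K mul H) * (e, r) = (c * e, r *~ c).
Proof. by rewrite dor_intr dorM /= mul0rz add0r (@kmul0l K mul H) addr0. Qed.

Lemma dor_mul00 (K : zmodType) (mul : K -> K -> K) (H : rng_axioms mul) (x y : K) :
  ((0, x) : @dor K mul H) * (0, y) = (0, mul x y).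
Proof. by rewrite dorM /= mulr0 !mulr0z !add0r. Qed.

Lemma dor_pow (K : zmodType) (mul : K -> K -> K) (H : rng_axioms mul) (a : K) n :
  ((0, a) : @dor K mul H) ^+ n = (if n == 0%N then 1 else 0, rpow mul a n).
Proof.
elim: n => [//|n IH]; rewrite exprS IH dorM /=.
case: n {IH} => [|n] /=; first by rewrite mul0r mulr1z mulr0z (@kmul0r K mul H) !addr0.
by rewrite mulr0 !mulr0z !add0r.
Qed.

Lemma dor_mono (K : zmodType) (mul : K -> K -> K) (H : rng_axioms mul) (a b : K) i j :
  ((0, a) : @dor K mul H) ^+ i * ((0, b) : @dor K mul H) ^+ j =
  (if (i == 0%N) && (j == 0%N) then 1 else 0, mono mul a b i j).
Proof.
rewrite !dor_pow /mono; case: i => [|i] /=; first by rewrite mul1r; case: j.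
case: j => [|j] /=; first by rewrite mulr1.
by rewrite dor_mul00.
Qed.

Lemma dor_sum (K : zmodType) (mul : K -> K -> K) (H : rng_axioms mul) (I : Type) (r : seq I)
  (P : pred I) (F : I -> @dor K mul H) :
  \sum_(i <- r | P i) F i = (\sum_(i <- r | P i) (F i).1, \sum_(i <- r | P i) (F i).2).
Proof.
elim/big_rec3: _ => //= i x y z _ ->.
by rewrite [F i]dor_eta.
Qed.

Lemma pair_sum (A B : zmodType) (I : Type) (r : seq I)
  (P : pred I) (F : I -> (A * B)%type) :
  \sum_(i <- r | P i) F i = (\sum_(i <- r | P i) (F i).1, \sum_(i <- r | P i) (F i).2).
Proof.
elim/big_rec3: _ => //= i x y z _ ->.
by case: (F i).
Qed.

Lemma hv_pair (K : zmodType) (mul : K -> K -> K) (H : rng_axioms mul) (a : K) (g : {poly int}) :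
  g`_0 = 0 -> hv ((0, a) : @dor K mul H) g = (0, peval mul g a).
Proof.
move=> g0; rewrite hvE dor_sum; congr pair.
  apply: big1 => -[[|i] ?] _; rewrite dor_pow dor_intrM //= ?mulr0 //.
  by rewrite g0 mul0r.
by apply: eq_bigr => i _; rewrite dor_pow dor_intrM.
Qed.

Lemma dor_comm (K : zmodType) (mul : K -> K -> K) (H : rng_axioms mul) (a b : K) :
  mul a b = mul b a -> GRing.comm ((0, a) : @dor K mul H) (0, b).
Proof. by move=> hab; rewrite /GRing.comm !dor_mul00 hab. Qed.

Lemma ev2_pair (K : zmodType) (mul : K -> K -> K) (H : rng_axioms mul) (a b : K)
  (cuv : GRing.comm ((0, a) : @dor K mul H) (0, b)) (f : {poly {poly int}}) :
  f`_0`_0 = 0 -> ev2 cuv f = (0, peval2 mul f a b).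
Proof.
move=> f0; rewrite ev2E.
have E i j : ((f`_i`_j)%:~R * ((0, b) : @dor K mul H) ^+ j) * ((0, a) : @dor K mul H) ^+ i =
             ((f`_i`_j) * (if (i == 0%N) && (j == 0%N) then 1 else 0), mono mul a b i j *~ f`_i`_j).
  rewrite -mulrA.
  have -> : ((0, b) : @dor K mul H) ^+ j * ((0, a) : @dor K mul H) ^+ i = ((0, a) : @dor K mul H) ^+ i * ((0, b) : @dor K mul H) ^+ j.
    by apply: commrX; apply/commr_sym/commrX.
  by rewrite dor_mono dor_intrM.
under eq_bigr => i _ do rewrite mulr_suml.
rewrite (eq_bigr (fun i : 'I_(size f) => \sum_(j < size f`_i)
   ((f`_i`_j) * (if (i == 0%N :> nat) && (j == 0%N :> nat) then 1 else 0), mono mul a b i j *~ f`_i`_j))); last first.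
  by move=> i _; apply: eq_bigr => j _; exact: E.
rewrite dor_sum; congr pair.
  apply: big1 => i _; rewrite pair_sum /=; apply: big1 => j _.
  by case: i j => [[|i] ?] [[|j] ?] /=; rewrite ?mulr0 // f0 mul0r.
by apply: eq_bigr => i _; rewrite pair_sum.
Qed.

Lemma odd_dec n : (0 < n)%N -> exists e m, n = (2 ^ e * m)%N /\ odd m.
Proof.
elim: n {-2}n (leqnn n) => [|N IH] n; first by rewrite leqn0 => /eqP ->.
move=> le n0; case odn: (odd n); first by exists 0%N, n; rewrite mul1n.
have h2 : n = (n./2).*2 by rewrite -{1}(odd_double_half n) odn.
have hp : (0 < n./2)%N by move: n0; rewrite {1}h2 double_gt0.
have hl : (n./2 <= N)%N.
  by rewrite -ltnS (leq_trans _ le) // {2}h2 -addnn -addn1 leq_add2l.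
have [e [m [hm om]]] := IH _ hl hp.
by exists e.+1, m; split => //; rewrite h2 hm expnS -mulnA mul2n.
Qed.

Lemma phi_add (K F : zmodType) (phi : K -> F) :
  (forall x y, phi (x + y) = phi x + phi y) -> zmod_morphism phi.
Proof. by move=> hD x y; apply/eqP; rewrite eq_sym subr_eq -hD subrK. Qed.

Lemma phiMn (K F : zmodType) (phi : K -> F) (hD : forall x y, phi (x + y) = phi x + phi y) x (n : int) :
  phi (x *~ n) = phi x *~ n.
Proof.
pose f : {additive K -> F} := HB.pack phi (GRing.isZmodMorphism.Build K F _ (phi_add hD)).
exact: (raddfMz f).
Qed.
Lemma phiB (K F : zmodType) (phi : K -> F) (hD : forall x y, phi (x + y) = phi x + phi y) x y :
  phi (x - y) = phi x - phi y.
Proof. exact: (phi_add hD). Qed.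

Lemma part1 (K : zmodType) (mul : K -> K -> K) (H : rng_axioms mul) :
  finitely_separable mul -> forall a : K, exists g : {poly int},
      g != 0 /\ g`_0 = 0 /\ peval mul g a = 0.
Proof.
move=> Hs a.
case: (classic (exists g : {poly int}, g != 0 /\ g`_0 = 0 /\ peval mul g a = 0)) => // NG.
exfalso.
pose u : @dor K mul H := (0, a).
have pev (g : {poly int}) : g`_0 = 0 -> peval mul g a = (hv u g).2.
  by move=> g0; rewrite hv_pair.
pose A z := exists g : {poly int},
  [/\ g`_0 = 0, (map_poly intr g).[2^-1 : rat] \is a Num.int & z = peval mul g a].
have subA : is_subrng mul A.
  split; [|split].
  - exists 0; split; rewrite ?coef0 ?rmorph0 ?horner0 ?rpred0 //.
    by rewrite /peval size_poly0 big_ord0.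
  - move=> x y [g [g0 gi ->]] [h [h0 hi ->]]; exists (g - h); split.
    + by rewrite coefB g0 h0 subr0.
    + by rewrite rmorphB hornerD hornerN rpredB.
    + by rewrite !pev ?coefB ?g0 ?h0 ?subr0 // hvB !hv_pair.
  - move=> x y [g [g0 gi ->]] [h [h0 hi ->]]; exists (g * h); split.
    + by rewrite coef0M g0 mul0r.
    + by rewrite rmorphM hornerM rpredM.
    + by rewrite !pev ?coef0M ?g0 ?mul0r // hvM !hv_pair // dor_mul00.
have aA : ~ A a.
  move=> [g [g0 gi ga]]; apply: NG; exists ('X - g); split; [|split].
  - apply/eqP => r0; move: gi; have -> : g = 'X.
      by apply/eqP; rewrite eq_sym -subr_eq0 r0.
    by rewrite map_polyX hornerX.
  - by rewrite coefB coefX g0 subr0.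
  - rewrite pev ?coefB ?coefX ?g0 ?subr0 // hvB -(expr1 'X) hvX expr1 hv_pair //=.
    by rewrite -ga subrr.
have [F [mulF [axF [phi [[hD hM] sep]]]]] := Hs a A subA aA.
have cF : (0 < #|F|)%N by apply/card_gt0P; exists 0.
have [e [m [hN om]]] := odd_dec cF.
pose s : {poly int} := 'X - ((#|F|)%:Z)%:P * 'X ^+ e.+1.
apply: sep; exists (peval mul s a); split.
  exists s; split => //.
  - by rewrite coefB coefX coefCM coefXn /= mulr0 subr0.
  - change (hv (2^-1 : rat) s \is a Num.int); rewrite /s hvB -(expr1 'X) hvX expr1 hvM hvC hvX.
    rewrite hN -(odd_double_half m) om /=.
    rewrite -pmulrn natrM natrX exprS exprVn.
    set k := m./2.
    have -> : (2 : rat)^-1 - (2 ^+ e * (1 + k.*2)%:R) * (2^-1 * (2 ^+ e)^-1) = - (k%:R).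
      have h2 : (2 : rat) ^+ e != 0 by rewrite expf_neq0.
      rewrite -muln2 natrD natrM; field.
      by rewrite h2.
    by rewrite rpredN rpred_nat.
rewrite pev; last by rewrite coefB coefX coefCM coefXn /= mulr0 subr0.
rewrite hvB -(expr1 'X) hvX expr1 hvM hvC hvX dor_pow dor_intrM /=.
by rewrite (phiB hD) (phiMn hD) -pmulrn mulrn_card subr0.
Qed.

Lemma ev2Xn (R : nzRingType) (u v : R) (cuv : GRing.comm u v) f n :
  ev2 cuv (f ^+ n) = ev2 cuv f ^+ n.
Proof. exact: rmorphXn. Qed.
Lemma ev2x (R : nzRingType) (u v : R) (cuv : GRing.comm u v) : ev2 cuv 'X = u.
Proof. by rewrite -(expr1 'X) ev2X expr1. Qed.
Lemma ev2y (R : nzRingType) (u v : R) (cuv : GRing.comm u v) : ev2 cuv ('X%:P) = v.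
Proof. by rewrite -(expr1 'X) ev2Y expr1. Qed.
Lemma ev2_0 (R : nzRingType) (u v : R) (cuv : GRing.comm u v) : ev2 cuv 0 = 0.
Proof. exact: rmorph0. Qed.

Lemma ev2_00 (c00 : GRing.comm (0 : int) 0) f : ev2 c00 f = f`_0`_0.
Proof.
rewrite /ev2 /horner_morph horner_coef0 coef_map /=.
by rewrite /hv /horner_morph horner_coef0 coef_map /= intz.
Qed.

Lemma rpowD (K : zmodType) (mul : K -> K -> K) (H : rng_axioms mul) (x : K) n1 n2 :
  (0 < n1)%N -> (0 < n2)%N -> rpow mul x (n1 + n2) = mul (rpow mul x n1) (rpow mul x n2).
Proof.
move=> h1 h2.
have := congr1 snd (exprD ((0, x) : @dor K mul H) n1 n2).
rewrite !dor_pow; case: n1 h1 => // n1 _; case: n2 h2 => // n2 _.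
by rewrite addSn dor_mul00.
Qed.

Lemma field_id (T : fieldType) (t : T) m k : t != 0 ->
  t^-2 + (t * t^-2) ^+ m * t ^+ (m + k.+2) * t^-2
       - (t * t^-2) ^+ (m + k.+2) * t ^+ (m + k.+2) * t^-2 = t ^+ k.
Proof.
move=> t0.
have e1 : t * t^-2 = t^-1 by rewrite expr2 invfM mulrA mulfV // mul1r.
have inv n : t^-1 ^+ n * t ^+ n = 1 by rewrite exprVn mulVf // expf_neq0.
rewrite e1 inv mul1r exprD mulrA inv mul1r addrAC subrr add0r.
by rewrite -addn2 exprD -mulrA mulfV ?mulr1 // expf_neq0.
Qed.

Lemma Fp_int_dvd (p : nat) (c : int) : prime p -> (p%:Z %| c)%Z ->
  (c%:~R : {fraction {poly 'F_p}}) = 0.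
Proof.
move=> pr /dvdzP [q ->].
rewrite intrM (_ : (p%:Z)%:~R = p%:R) // -(rmorph_nat (@tofrac _)) -polyC_natr.
by rewrite (pcharf0 (pchar_Fp pr)) rmorph0 mulr0.
Qed.

Lemma part2 (K : zmodType) (mul : K -> K -> K) (H : rng_axioms mul) :
  finitely_separable mul ->
  forall (a b : K) (p : nat), mul a b = mul b a -> prime p ->
     exists f : {poly {poly int}},
       f`_0`_0 = 0 /\
       (exists i j : nat, ~~ (p%:Z %| f`_i`_j)%Z) /\
       peval2 mul f a b = 0.
Proof.
move=> Hs a b p hab pr.
case: (classic (exists f : {poly {poly int}}, f`_0`_0 = 0 /\
       (exists i j : nat, ~~ (p%:Z %| f`_i`_j)%Z) /\ peval2 mul f a b = 0)) => // NF.
exfalso.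
have NFd (f : {poly {poly int}}) : f`_0`_0 = 0 -> peval2 mul f a b = 0 ->
    forall i j, (p%:Z %| f`_i`_j)%Z.
  move=> f0 fz i j; apply: NNPP => nd; apply: NF.
  by exists f; split => //; split => //; exists i, j; apply/negP.
pose u : @dor K mul H := (0, a).
pose v : @dor K mul H := (0, b).
have cuv : GRing.comm u v by apply: dor_comm.
have pev (f : {poly {poly int}}) : f`_0`_0 = 0 -> peval2 mul f a b = (ev2 cuv f).2.
  by move=> f0; rewrite ev2_pair.
pose T := {fraction {poly 'F_p}}.
pose t : T := tofrac 'X.
have t0 : t != 0 by rewrite tofrac_eq0 polyX_eq0.
have ct : GRing.comm t (t^-2) by apply: mulrC.
pose psi := ev2 ct.
have coef00B (f g : {poly {poly int}}) : (f - g)`_0`_0 = f`_0`_0 - g`_0`_0.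
  by rewrite !coefB.
have coef00M (f g : {poly {poly int}}) : (f * g)`_0`_0 = f`_0`_0 * g`_0`_0.
  by rewrite !coef0M.
pose A z := exists f : {poly {poly int}},
  [/\ f`_0`_0 = 0, exists q : {poly 'F_p}, psi f = tofrac q & z = peval2 mul f a b].
have subA : is_subrng mul A.
  split; [|split].
  - exists 0; split; rewrite ?coef0 //.
      by exists 0; rewrite /psi ev2_0 rmorph0.
    by rewrite /peval2 size_poly0 big_ord0.
  - move=> x y [f [f0 [q fq] ->]] [g [g0 [r gr] ->]]; exists (f - g); split.
    + by rewrite coef00B f0 g0 subr0.
    + by exists (q - r); rewrite /psi ev2B -/psi fq gr rmorphB.
    + by rewrite !pev ?coef00B ?f0 ?g0 ?subr0 // ev2B !ev2_pair.
  - move=> x y [f [f0 [q fq] ->]] [g [g0 [r gr] ->]]; exists (f * g); split.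
    + by rewrite coef00M f0 mul0r.
    + by exists (q * r); rewrite /psi ev2M -/psi fq gr rmorphM.
    + by rewrite !pev ?coef00M ?f0 ?mul0r // ev2M !ev2_pair // dor_mul00.
have bA : ~ A b.
  move=> [f [f0 [q fq] fb]].
  pose r := ('X : {poly int})%:P - f.
  have r0 : r`_0`_0 = 0 by rewrite coef00B coefC /= coefX f0 subr0.
  have rz : peval2 mul r a b = 0.
    by rewrite pev // ev2B ev2y ev2_pair //= -fb subrr.
  have psr : psi r = 0.
    rewrite /psi ev2E; apply: big1 => i _; apply/eqP; rewrite mulf_eq0; apply/orP; left.
    apply/eqP/big1 => j _; rewrite Fp_int_dvd ?mul0r //.
    exact: NFd.
  move: psr; rewrite /psi ev2B ev2y -/psi fq => /eqP; rewrite subr_eq0 => /eqP e.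
  have : tofrac (q * 'X ^+ 2) = (1 : T).
    rewrite tofracM -e tofracXn; exact: (mulVf (expf_neq0 2 t0)).
  move/eqP; rewrite -tofrac1 tofrac_eq => /eqP /(congr1 (horner^~ 0)).
  by rewrite hornerM hornerXn expr0n mulr0 hornerC => /eqP; rewrite eq_sym oner_eq0.
have [F [mulF [axF [phi [[hD hM] sep]]]]] := Hs b A subA bA.
pose ab := mul a b.
pose g (i : 'I_(#|F|.+1)) := phi (rpow mul ab i.+1).
have [i [j [ij gij]]] : exists i j : 'I_(#|F|.+1), (i < j)%N /\ g i = g j.
  have ng : ~ injective g.
    by move=> /leq_card; rewrite card_ord ltnn.
  apply: NNPP => nex; apply: ng => x y gxy; apply/eqP; apply: NNPP => nxy.
  case: (ltngtP x y) => hxy.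
  - by apply: nex; exists x, y.
  - by apply: nex; exists y, x.
  - by apply: nxy; rewrite -val_eqE /= hxy.
pose m := i.+1.
pose d := (j - i)%N.
have d0 : (0 < d)%N by rewrite subn_gt0.
have per : forall c, phi (rpow mul ab (m + c * d)) = phi (rpow mul ab m).
  elim=> [|c IH]; first by rewrite mul0n addn0.
  rewrite mulSn addnCA addnC (rpowD H) ?addn_gt0 // hM IH -hM -(rpowD H) //.
  have -> : (m + d = j.+1)%N by rewrite /m /d addSn subnKC // ltnW.
  exact: (esym gij).
pose k := (d.-1 + d.-1)%N.
pose n1 := (i + k.+2)%N.
have eM : (m + 2 * d = n1.+1)%N.
  rewrite /n1 /k /m -addSn; congr (_ + _)%N.
  by rewrite mul2n -addnn -(prednK d0) addnS addSn.
have perM : phi (rpow mul ab n1.+1) = phi (rpow mul ab m) by rewrite -eM per.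
pose xP : {poly {poly int}} := 'X.
pose yP : {poly {poly int}} := ('X)%:P.
pose s := yP + (xP * yP) ^+ m * xP ^+ n1.+1 * yP - (xP * yP) ^+ n1.+1 * xP ^+ n1.+1 * yP.
have c00 : GRing.comm (0 : int) 0 by exact: mulrC.
have s00 : s`_0`_0 = 0.
  rewrite -(ev2_00 c00) /s ev2B ev2D !ev2M !ev2Xn ev2M ev2x ev2y.
  by rewrite !mulr0 addr0 subr0.
apply: sep; exists (peval2 mul s a b); split.
  exists s; split => //.
  exists ('X ^+ k); rewrite /psi /s ev2B ev2D !ev2M !ev2Xn ev2M ev2x ev2y.
  by rewrite /n1 /m -addSn field_id // tofracXn.
rewrite pev // /s ev2B ev2D !ev2M !ev2Xn ev2M ev2x ev2y.
rewrite /u /v dor_mul00 !dor_pow (_ : (m == 0%N) = false) // (_ : (n1.+1 == 0%N) = false) // !dor_mul00 /=.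
rewrite (phiB hD) hD !mulr0z !add0r !hM -/ab; move: perM; rewrite /rpow /m /= => ->; exact: addrK.
Qed.
Unset Implicit Arguments.

Theorem lemma2 (K : zmodType) (mul : K -> K -> K) :
  rng_axioms mul -> finitely_separable mul ->
  (forall a : K, exists g : {poly int},
      g != 0 /\ g`_0 = 0 /\ peval mul g a = 0) /\
  (forall (a b : K) (p : nat), mul a b = mul b a -> prime p ->
     exists f : {poly {poly int}},
       f`_0`_0 = 0 /\
       (exists i j : nat, ~~ (p%:Z %| f`_i`_j)%Z) /\
       peval2 mul f a b = 0).
Proof.
move=> H Hs; split; [exact: part1 | exact: part2].
Qed.
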